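(* Let $m\geq 1$ and $n>2m$ be integers with $\gcd\{m,n\}=1$, and let $$P(z)=z^{n}-\frac{2n}{n-m}z^{n-m}+\frac{n}{n-2m}z^{n-2m}+c,$$ where $c\in\mathbb{C}$ satisfies $|c|\neq 0$ and $|c|\neq\frac{2m^2}{(n-m)(n-2m)}$. Then $P$ is a critically injective polynomial having only simple zeros.
   Context: A polynomial $P$ whose derivative $P'$ has distinct zeros $d_1,\dots,d_t$ is called critically injective if $P(d_i)\neq P(d_j)$ for all $i\neq j$. *)

(* Defs.v *)
From HB Require Import structures.
From mathcomp Require Import all_boot all_order all_algebra.
From mathcomp Require Import reals.
From mathcomp Require Export complex.
Set Implicit Arguments. Unset Strict Implicit. Unset Printing Implicit Defensive.
Import Order.TTheory GRing.Theory Num.Theory.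
Local Open Scope ring_scope.

Definition simple_zeros (F : idomainType) (P : {poly F}) : Prop :=
  forall z : F, root P z -> ~~ root P^`() z.

Definition critically_injective (F : idomainType) (P : {poly F}) : Prop :=
  forall d1 d2 : F, root P^`() d1 -> root P^`() d2 -> d1 != d2 ->
    P.[d1] != P.[d2].

(* Main.v *)
Require Import Defs.
From HB Require Import structures.
From mathcomp Require Import all_boot all_order all_algebra.
From mathcomp Require Import reals complex.
From mathcomp Require Import ring zify.
Import Order.TTheory GRing.Theory Num.Theory.
Local Open Scope ring_scope.

Lemma eX (F : nzRingType) (z : F) (i j : nat) : i = j -> z ^+ i = z ^+ j.
Proof. by move->. Qed.

Theorem lemma3p1 (R : realType) (m n : nat) (c : R[i])
  (hm : (1 <= m)%N) (hn : (2 * m < n)%N) (hcop : coprime m n)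
  (hc0 : `|c| != 0)
  (hc1 : `|c| != (2 * m ^ 2)%:R / ((n - m) * (n - 2 * m))%:R) :
  let P : {poly R[i]} :=
    'X^n - ((2 * n)%:R / (n - m)%:R) *: 'X^(n - m)
         + (n%:R / (n - 2 * m)%:R) *: 'X^(n - 2 * m) + c%:P in
  critically_injective P /\ simple_zeros P.
Proof.
move=> P.
pose a := (n - 2 * m - 1)%N.
have ha : a = (n - 2 * m - 1)%N by [].
clearbody a.
pose K : R[i] := (2 * m ^ 2)%:R / ((n - m) * (n - 2 * m))%:R.
have hnm : (n - m)%:R != 0 :> R[i] by rewrite pnatr_eq0; lia.
have hn2m : (n - 2 * m)%:R != 0 :> R[i] by rewrite pnatr_eq0; lia.
have hn0 : n%:R != 0 :> R[i] by rewrite pnatr_eq0; lia.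
have hder : forall z : R[i], P^`().[z] = n%:R * z ^+ a * (z ^+ m - 1) ^+ 2.
  move=> z; rewrite /P !derivE addr0 !(hornerD, hornerN, hornerZ, hornerMn, hornerXn).
  rewrite (_ : z ^+ n.-1 = z ^+ a * z ^+ m * z ^+ m); last first.
    by rewrite -!exprD; apply: eX; lia.
  rewrite (_ : z ^+ (n - m).-1 = z ^+ a * z ^+ m); last first.
    by rewrite -!exprD; apply: eX; lia.
  rewrite (_ : z ^+ (n - 2 * m).-1 = z ^+ a); last first.
    by apply: eX; lia.
  rewrite -[z ^+ a * z ^+ m * z ^+ m *+ n]mulr_natr -[z ^+ a * z ^+ m *+ (n - m)]mulr_natr -[z ^+ a *+ (n - 2 * m)]mulr_natr.
  change (z ^+ a * z ^+ m * z ^+ m * n%:R - (2 * n)%:R / (n - m)%:R * (z ^+ a * z ^+ m * (n - m)%:R)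
     + n%:R / (n - 2 * m)%:R * (z ^+ a * (n - 2 * m)%:R)
     = n%:R * z ^+ a * (z ^+ m - 1) ^+ 2).
  by field; rewrite hn2m hnm.
have hcrit : forall z : R[i], root P^`() z -> z = 0 \/ z ^+ m = 1.
  move=> z; rewrite /root hder !mulf_eq0 (negbTE hn0) /= expf_eq0 subr_eq0 orbb.
  case/orP=> [/andP[_ /eqP ->]|/eqP ->]; by [left|right].
have hval : forall z : R[i], P.[z] = z ^+ n - (2 * n)%:R / (n - m)%:R * z ^+ (n - m)
   + n%:R / (n - 2 * m)%:R * z ^+ (n - 2 * m) + c.
  by move=> z; rewrite /P !hornerE.
have hP0 : P.[0] = c.
  rewrite hval (_ : n = (n - 1).+1)%N; last by lia.
  rewrite (_ : (n - 1).+1 - m = (n - m - 1).+1)%N; last by lia.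
  rewrite (_ : (n - 1).+1 - 2 * m = (n - 2 * m - 1).+1)%N; last by lia.
  by rewrite !exprS !mul0r !mulr0 subrr !add0r.
have hP1 : forall z : R[i], z ^+ m = 1 -> P.[z] = K * z ^+ n + c.
  move=> z hz; rewrite hval.
  rewrite (_ : z ^+ n = z ^+ (n - 2 * m) * z ^+ m * z ^+ m); last first.
    by rewrite -!exprD; apply: eX; lia.
  rewrite (_ : z ^+ (n - m) = z ^+ (n - 2 * m) * z ^+ m); last first.
    by rewrite -!exprD; apply: eX; lia.
  rewrite hz !mulr1; congr (_ + _).
  have hA : (n - m)%:R = n%:R - m%:R :> R[i] by rewrite natrB //; lia.
  have hB : (n - 2 * m)%:R = n%:R - 2 * m%:R :> R[i] by rewrite natrB ?natrM //; lia.
  move: hnm hn2m; rewrite /K !natrM hA hB ?natrX => hnm' hn2m'.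
  by field; rewrite hnm' hn2m'.
have hK : K != 0.
  rewrite /K mulf_neq0 // ?invr_eq0 pnatr_eq0 -lt0n ?muln_gt0 ?expn_gt0 /=; lia.
have habs : forall z : R[i], z ^+ m = 1 -> `|z| = 1.
  move=> z hz; apply/eqP; rewrite -(pexpr_eq1 (x := `|z|) hm) //.
  by rewrite -normrX hz normr1.
have hinj : forall x y : R[i], x ^+ m = 1 -> y ^+ m = 1 -> x ^+ n = y ^+ n -> x = y.
  move=> x y hx hy hxy.
  have [b hb hdiv] := Bezoutl n hm.
  rewrite (eqP hcop) in hdiv.
  case/dvdnP: hdiv => k hk.
  have hX : forall w : R[i], w ^+ m = 1 -> w * (w ^+ n) ^+ b = 1.
    by move=> w hw; rewrite -exprM -exprS mulnC -add1n hk mulnC exprM hw expr1n.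
  have := hX x hx; rewrite -(hX y hy) hxy => e.
  apply: (mulIf _ e) => //.
  apply/negP => /eqP h0; move: (hX y hy); by rewrite h0 mulr0 => /eqP; rewrite eq_sym oner_eq0.
split.
  move=> d1 d2 h1 h2 hne.
  case: (hcrit _ h1) => [e1|e1]; case: (hcrit _ h2) => [e2|e2].
  - by rewrite e1 e2 eqxx in hne.
  - rewrite e1 hP0 hP1 // eq_sym -subr_eq0 addrK mulf_neq0 //.
    by rewrite expf_neq0 // -normr_eq0 habs // oner_eq0.
  - rewrite e2 hP0 hP1 // -subr_eq0 addrK mulf_neq0 //.
    by rewrite expf_neq0 // -normr_eq0 habs // oner_eq0.
  - rewrite !hP1 // (can_eq (addrK c)) (inj_eq (mulfI hK)).
    by apply/negP => /eqP /(hinj _ _ e1 e2) /eqP; rewrite (negbTE hne).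
move=> z hz; apply/negP => hd.
case: (hcrit _ hd) => e.
  by move: hz; rewrite /root e hP0 -normr_eq0 (negbTE hc0).
move: hz; rewrite /root hP1 // addrC addr_eq0 => /eqP hc.
move: hc1; rewrite hc normrN normrM normrX (habs z) // expr1n mulr1.
by rewrite ger0_norm ?eqxx // /K divr_ge0 // ler0n.
Qed.
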